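(* Let $G$ be an $n$-node graph with a colored tree labeling, let $k\ge1$, and let $c\ge 3/2$ be a constant with $p=(c\log n)/n^{1/k}\le 1$. Suppose each node of $G$ is independently chosen to be a way-point with probability $p$. Call a short segment any directed path or cycle $S$ contained in some maximal connected subgraph $C$ of $G_k$ all of whose nodes have the same level $\ell$ with $1<\ell\le k$, such that $|S|\le 4n^{1/k}$; call $S$ crowded if it contains more than $8c\log n$ way-points. Then \[ \Pr(G_k \text{ contains a crowded short segment}) = O(1/n). \]
   Context: Colored tree labelings. A colored tree labeling of a graph $G$ of bounded degree assigns to each node $v$ a parent $\mathrm{P}(v)$, a left child $\mathrm{LC}(v)$ and a right child $\mathrm{RC}(v)$, each a port number of $v$ or $\bot$ (a non-$\bot$ value is identified with the neighbor reached through that port; the non-$\bot$ values at $v$ are pairwise distinct), and a color $\chi_{\mathrm{in}}(v)\in\{R,B\}$. Hierarchical forest. Define $\mathrm{level}(v)=1$ if $\mathrm{RC}(v)=\bot$ and $\mathrm{level}(v)=1+\mathrm{level}(\mathrm{RC}(v))$ otherwise. For $k\ge1$, the hierarchical forest $G_k$ contains the edge $\{u,v\}$ iff $\mathrm{level}(u),\mathrm{level}(v)\le k$, $v=\mathrm{P}(u)$, and either ($u=\mathrm{LC}(v)$ and $\mathrm{level}(v)=\mathrm{level}(u)$) or ($u=\mathrm{RC}(v)$ and $\mathrm{level}(v)=\mathrm{level}(u)+1$); it is viewed as directed from $v$ (parent) to $u$ (child). Each maximal connected subgraph of $G_k$ whose nodes all have the same level is a directed path or cycle along $\mathrm{LC}$-edges.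 Here $\log$ denotes the natural logarithm (the statement also holds with base 2). *)

(* Defs.v *)
From Stdlib Require Import Reals List Arith Lia ClassicalEpsilon.
Import ListNotations.
Open Scope R_scope.

Record graph := mkGraph {
  gn : nat;
  adj : nat -> nat -> bool
}.

Definition simple_graph (G : graph) : Prop :=
  (forall u v, adj G u v = true -> (u < gn G)%nat /\ (v < gn G)%nat) /\
  (forall u v, adj G u v = adj G v u) /\
  (forall u, adj G u u = false).

Definition degree (G : graph) (v : nat) : nat :=
  length (filter (fun w => adj G v w) (seq 0 (gn G))).

Definition max_degree_le (G : graph) (D : nat) : Prop :=
  forall v, (v < gn G)%nat -> (degree G v <= D)%nat.

(* Colored tree labeling. A port number is identified with the neighbor it
   reaches, so P, LC, RC take values in option nodes (None = bot). *)
Record labeling := mkLab {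
  P : nat -> option nat;
  LC : nat -> option nat;
  RC : nat -> option nat;
  chi_in : nat -> bool   (* true = R, false = B *)
}.

Definition port_ok (G : graph) (v : nat) (o : option nat) : Prop :=
  match o with None => True | Some w => adj G v w = true end.

Definition distinct_opt (a b : option nat) : Prop :=
  match a, b with Some x, Some y => x <> y | _, _ => True end.

Definition colored_tree_labeling (G : graph) (L : labeling) : Prop :=
  forall v, (v < gn G)%nat ->
    port_ok G v (P L v) /\ port_ok G v (LC L v) /\ port_ok G v (RC L v) /\
    distinct_opt (P L v) (LC L v) /\ distinct_opt (P L v) (RC L v) /\
    distinct_opt (LC L v) (RC L v).

(* level(v) = 1 if RC(v) = bot, 1 + level(RC(v)) otherwise.  Nodes whose
   RC-chain never reaches bot have no level (and are in no G_k). *)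
Inductive has_level (L : labeling) : nat -> nat -> Prop :=
  | lvl_base : forall v, RC L v = None -> has_level L v 1
  | lvl_step : forall v u l, RC L v = Some u -> has_level L u l ->
               has_level L v (S l).

(* Directed edge v -> u (v parent, u child) of the hierarchical forest G_k. *)
Definition Gk_edge (G : graph) (L : labeling) (k : nat) (v u : nat) : Prop :=
  (u < gn G)%nat /\ (v < gn G)%nat /\
  exists lu lv, has_level L u lu /\ has_level L v lv /\
    (lu <= k)%nat /\ (lv <= k)%nat /\ P L u = Some v /\
    ((LC L v = Some u /\ lv = lu) \/ (RC L v = Some u /\ lv = S lu)).

Fixpoint consecutive (E : nat -> nat -> Prop) (s : list nat) : Prop :=
  match s with
  | x :: ((y :: _) as t) => E x y /\ consecutive E t
  | _ => True
  end.

(* A directed path S (a directed cycle has the same node set as the path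
   through its nodes, so cycles need not be listed separately) of G_k all of whose nodes have the same level
   l with 1 < l <= k (hence S lies in a maximal same-level connected
   subgraph C of G_k), with at most 4 n^(1/k) nodes. *)
Definition short_segment (G : graph) (L : labeling) (k : nat) (S : list nat) : Prop :=
  S <> [] /\ NoDup S /\
  (exists l, (1 < l)%nat /\ (l <= k)%nat /\ forall v, In v S -> has_level L v l) /\
  consecutive (Gk_edge G L k) S /\
  INR (length S) <= 4 * Rpower (INR (gn G)) (1 / INR k).

Definition is_wp (w : list bool) (v : nat) : bool := nth v w false.

Definition crowded (c : R) (n : nat) (w : list bool) (S : list nat) : Prop :=
  INR (length (filter (is_wp w) S)) > 8 * c * ln (INR n).

(* Product probability space: each node independently a way-point with prob p. *)
Fixpoint assignments (n : nat) : list (list bool) :=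
  match n with
  | O => (@nil bool) :: nil
  | S m => map (cons true) (assignments m) ++ map (cons false) (assignments m)
  end.

Definition weight (p : R) (w : list bool) : R :=
  fold_right (fun (b : bool) (acc : R) => (if b then p else 1 - p) * acc) 1 w.

Definition indicator (A : Prop) : R :=
  if excluded_middle_informative A then 1 else 0.

Definition Pr (n : nat) (p : R) (E : list bool -> Prop) : R :=
  fold_right Rplus 0 (map (fun w => weight p w * indicator (E w)) (assignments n)).

(* Main.v *)
Require Import Defs.
From Stdlib Require Import Reals Lra Lia List Factorial FunctionalExtensionality ClassicalEpsilon ZArith.
Import ListNotations.
Open Scope R_scope.
Lemma exp1_le : exp 1 <= 30/11.
Proof.
  assert (exp_1 : exp 1 <> 0) by (apply Rgt_not_eq, exp_pos).
  assert (Hm : exp (-1) * exp 1 = 1) by (rewrite <- exp_plus; replace (-1+1) with 0 by ring; apply exp_0).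
  cut (11/30 <= exp (-1)).
  { intro H. pose proof (exp_pos 1). nra. }
  unfold exp; case (exist_exp (-1)) as (x,e); simpl in |- *;
    unfold exp_in in e;
      assert (H := alternated_series_ineq (fun i:nat => / INR (fact i)) x 2).
  cut
    (sum_f_R0 (tg_alt (fun i:nat => / INR (fact i))) (S (2 * 2)) <= x <=
      sum_f_R0 (tg_alt (fun i:nat => / INR (fact i))) (2 * 2)).
  { intro; elim H0; clear H0; intros H0 _; simpl in H0; unfold tg_alt in H0;
      simpl in H0. lra. }
  apply H.
  - unfold Un_decreasing; intros;
      apply Rmult_le_reg_l with (INR (fact n)).
    { apply INR_fact_lt_0. }
    apply Rmult_le_reg_l with (INR (fact (S n))).
    { apply INR_fact_lt_0. }
    rewrite Rinv_r.
    2:{ apply INR_fact_neq_0. }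
    rewrite Rmult_1_r; rewrite Rmult_comm; rewrite Rmult_assoc;
      rewrite Rinv_l.
    2:{ apply INR_fact_neq_0. }
    rewrite Rmult_1_r; apply le_INR; apply fact_le; apply Nat.le_succ_diag_r.
  - assert (H0 := cv_speed_pow_fact 1); unfold Un_cv; unfold Un_cv in H0;
      intros; elim (H0 _ H1); intros; exists x0; intros;
      unfold Rdist in H2; unfold Rdist;
      replace (/ INR (fact n)) with (1 ^ n / INR (fact n));auto.
    unfold Rdiv; rewrite pow1; rewrite Rmult_1_l; reflexivity.
  - unfold infinite_sum in e; unfold Un_cv, tg_alt; intros; elim (e _ H0);
      intros; exists x0; intros;
      replace (sum_f_R0 (fun i:nat => (-1) ^ i * / INR (fact i)) n) with
      (sum_f_R0 (fun i:nat => / INR (fact i) * (-1) ^ i) n);auto.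
    apply sum_eq; intros; apply Rmult_comm.
Qed.

Lemma ln2_ge : 2/3 <= ln 2.
Proof.
  pose proof exp1_le as H1.
  assert (E : exp (2/3) * exp (2/3) * exp (2/3) = exp 1 * exp 1).
  { rewrite <- !exp_plus. f_equal. field. }
  assert (exp (2/3) <= 2).
  { destruct (Rle_dec (exp (2/3)) 2) as [h|h]; auto. exfalso.
    pose proof (exp_pos 1). nra. }
  rewrite <- (ln_exp (2/3)). destruct (Rle_lt_or_eq_dec _ _ H) as [h|h].
  - left. apply ln_increasing; auto. apply exp_pos.
  - rewrite h; right; reflexivity.
Qed.

Definition sumL {A} (f : A -> R) (l : list A) : R := fold_right Rplus 0 (map f l).

Lemma sumL_app {A} (f : A -> R) l1 l2 : sumL f (l1 ++ l2) = sumL f l1 + sumL f l2.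
Proof. unfold sumL; induction l1; simpl; [ring| rewrite IHl1; ring]. Qed.

Lemma sumL_map {A B} (f : B -> R) (g : A -> B) l : sumL f (map g l) = sumL (fun x => f (g x)) l.
Proof. unfold sumL; rewrite map_map; reflexivity. Qed.

Lemma sumL_le {A} (f g : A -> R) l : (forall x, In x l -> f x <= g x) -> sumL f l <= sumL g l.
Proof. induction l; intros H; unfold sumL in *; simpl; [lra|].
  apply Rplus_le_compat; [apply H; left; auto| apply IHl; intros; apply H; right; auto]. Qed.

Lemma sumL_scale {A} (f : A -> R) a l : sumL (fun x => a * f x) l = a * sumL f l.
Proof. induction l; unfold sumL in *; simpl; [ring| rewrite IHl; ring]. Qed.

Lemma sumL_plus {A} (f g : A -> R) l : sumL (fun x => f x + g x) l = sumL f l + sumL g l.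
Proof. induction l; unfold sumL in *; simpl; [ring| rewrite IHl; ring]. Qed.

Lemma sumL_swap {A B} (g : A -> B -> R) (la : list A) (lb : list B) :
  sumL (fun a => sumL (fun b => g a b) lb) la = sumL (fun b => sumL (fun a => g a b) la) lb.
Proof. induction la; simpl.
  - unfold sumL; simpl. induction lb; simpl; [ring| rewrite <- IHlb; ring].
  - unfold sumL at 1; simpl. fold (sumL (fun a0 => sumL (fun b => g a0 b) lb) la).
    rewrite IHla. rewrite <- sumL_plus. reflexivity. Qed.

Lemma sumL_bound {A} (f : A -> R) l b : (forall x, In x l -> f x <= b) -> sumL f l <= INR (length l) * b.
Proof. induction l; intros H; [unfold sumL; simpl; lra|].
  change (length (a::l)) with (S (length l)). rewrite S_INR. unfold sumL in *; simpl. assert (f a <= b) by (apply H; left; auto).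
  assert (fold_right Rplus 0 (map f l) <= INR (length l) * b) by (apply IHl; intros; apply H; right; auto). lra. Qed.

Lemma weight_nonneg p w : 0 <= p <= 1 -> 0 <= weight p w.
Proof. intros Hp; induction w; simpl; [lra|]. destruct a; apply Rmult_le_pos; lra. Qed.

Lemma assign_len n w : In w (assignments n) -> length w = n.
Proof. revert w; induction n; simpl; intros w H.
  - destruct H as [<-|[]]; auto.
  - apply in_app_or in H; destruct H as [H|H]; apply in_map_iff in H; destruct H as [w' [<- H]]; simpl; f_equal; auto. Qed.

Fixpoint pw (g : nat -> bool -> R) (w : list bool) : R :=
  match w with [] => 1 | b :: w' => g O b * pw (fun i => g (S i)) w' end.

Fixpoint prodI (p : R) (g : nat -> bool -> R) (n : nat) : R :=
  match n with O => 1 | S m => (p * g O true + (1 - p) * g O false) * prodI p (fun i => g (S i)) m end.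

Lemma sum_prod p n : forall g, sumL (fun w => weight p w * pw g w) (assignments n) = prodI p g n.
Proof. induction n; intros g; simpl.
  - unfold sumL; simpl; ring.
  - rewrite sumL_app, !sumL_map. simpl.
    rewrite <- IHn.
    replace (fun x => p * weight p x * (g 0%nat true * pw (fun i => g (S i)) x)) with
       (fun x => (p * g 0%nat true) * (weight p x * pw (fun i => g (S i)) x)) by (apply functional_extensionality; intros; ring).
    replace (fun x => (1 - p) * weight p x * (g 0%nat false * pw (fun i => g (S i)) x)) with
       (fun x => ((1-p) * g 0%nat false) * (weight p x * pw (fun i => g (S i)) x)) by (apply functional_extensionality; intros; ring).
    rewrite !sumL_scale. ring. Qed.

Lemma filter_mapS (h : nat -> bool) l : filter h (map S l) = map S (filter (fun i => h (S i)) l).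
Proof. induction l; simpl; auto. destruct (h (S a)); simpl; rewrite IHl; auto. Qed.

Lemma seqS m : seq 0 (S m) = 0%nat :: map S (seq 0 m).
Proof. simpl. rewrite seq_shift. auto. Qed.

Lemma pow_count w : forall f : nat -> bool -> bool,
  2 ^ length (filter (fun i => f i (nth i w false)) (seq 0 (length w))) =
  pw (fun i b => if f i b then 2 else 1) w.
Proof. induction w as [|b w IH]; intros f; auto.
  change (length (b::w)) with (S (length w)). rewrite seqS. cbn [filter].
  rewrite filter_mapS. cbn [pw]. rewrite <- (IH (fun i b => f (S i) b)).
  destruct (f 0%nat (nth 0 (b::w) false)) eqn:E; cbn [length nth] in *; rewrite length_map; rewrite E; simpl; ring. Qed.

Lemma prodI_nonneg p n : forall g, (forall i, 0 <= p * g i true + (1-p) * g i false) -> 0 <= prodI p g n.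
Proof. induction n; intros g H; simpl; [lra|]. apply Rmult_le_pos; auto. Qed.

Lemma prodI_bound p n : forall (g : nat -> bool -> R) (h : nat -> bool), 0 <= p ->
  (forall i, 0 <= p * g i true + (1-p) * g i false <= if h i then exp p else 1) ->
  prodI p g n <= exp (p * INR (length (filter h (seq 0 n)))).
Proof. induction n; intros g h Hp H; simpl.
  - rewrite Rmult_0_r, exp_0. lra.
  -
    rewrite <- seq_shift, filter_mapS.
    assert (IHn' := IHn (fun i => g (S i)) (fun i => h (S i)) Hp (fun i => H (S i))).
    assert (Hn := prodI_nonneg p n (fun i => g (S i)) (fun i => proj1 (H (S i)))).
    destruct (H 0%nat) as [H1 H2].
    destruct (h 0%nat); cbn [length].
    + rewrite length_map, S_INR. replace (p * (INR (length (filter (fun i => h (S i)) (seq 0 n))) + 1))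
        with (p + p * INR (length (filter (fun i => h (S i)) (seq 0 n)))) by ring.
      rewrite exp_plus. apply Rmult_le_compat; auto.
    + rewrite length_map. rewrite <- (Rmult_1_l (exp _)). apply Rmult_le_compat; auto.
Qed.

Lemma level_det L v l1 l2 : has_level L v l1 -> has_level L v l2 -> l1 = l2.
Proof. intros H; revert l2; induction H; intros l2 H2; inversion H2; subst; try congruence.
  match goal with H : RC L v = _, H3 : RC L v = _ |- _ => rewrite H in H3; injection H3; intros; subst end. f_equal; auto. Qed.

Definition nextLC (L : labeling) v := match LC L v with Some u => u | None => v end.
Fixpoint lcn (L : labeling) v j := match j with O => v | S j' => lcn L (nextLC L v) j' end.

Lemma cons_LC G L k l : forall s, (forall v, In v s -> has_level L v l) ->
  consecutive (Gk_edge G L k) s -> consecutive (fun a b => LC L a = Some b) s.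
Proof. induction s as [|a s IH]; intros Hl Hc; simpl; auto.
  destruct s as [|b s]; auto. destruct Hc as [He Hc]. split.
  - destruct He as (_ & _ & lu & lv & Hu & Hv & _ & _ & _ & [[H1 H2]|[H1 H2]]); auto.
    assert (lu = l) by (apply (level_det L b); auto; apply Hl; simpl; auto).
    assert (lv = l) by (apply (level_det L a); auto; apply Hl; simpl; auto). lia.
  - apply IH; auto. intros; apply Hl; simpl; auto. Qed.

Lemma chain_in L : forall s v, consecutive (fun a b => LC L a = Some b) (v::s) ->
  forall y, In y (v::s) -> exists j, (j < length (v::s))%nat /\ lcn L v j = y.
Proof. induction s as [|u s IH]; intros v Hc y Hy.
  - destruct Hy as [<-|[]]. exists 0%nat; simpl; split; auto.
  - destruct Hc as [H1 Hc]. destruct Hy as [<-|Hy].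
    + exists 0%nat; simpl; split; auto; lia.
    + destruct (IH u Hc y Hy) as [j [Hj1 Hj2]]. exists (S j). simpl in *. split; [lia|].
      unfold nextLC; rewrite H1; auto. Qed.

Definition inT L M v i := existsb (fun j => Nat.eqb (lcn L v j) i) (seq 0 M).
Definition Xc L M n v (w : list bool) := length (filter (fun i => andb (inT L M v i) (is_wp w i)) (seq 0 n)).

Lemma is_wp_lt w y : is_wp w y = true -> (y < length w)%nat.
Proof. unfold is_wp; intros H. destruct (Nat.lt_ge_cases y (length w)); auto.
  rewrite nth_overflow in H; auto; discriminate. Qed.

Lemma count_le L M n v w S : NoDup S -> length w = n ->
  (forall y, In y S -> inT L M v y = true) ->
  (length (filter (is_wp w) S) <= Xc L M n v w)%nat.
Proof. intros Hn Hw Hin. unfold Xc. apply NoDup_incl_length.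
  - apply NoDup_filter; auto.
  - intros y Hy. apply filter_In in Hy. destruct Hy as [H1 H2]. apply filter_In. split.
    + apply in_seq. pose proof (is_wp_lt w y H2). lia.
    + rewrite Hin, H2; auto. Qed.

Lemma size_le L M n v : (length (filter (inT L M v) (seq 0 n)) <= M)%nat.
Proof. assert (H : (length (filter (inT L M v) (seq 0 n)) <= length (map (lcn L v) (seq 0 M)))%nat).
  2:{ rewrite length_map, length_seq in H; auto. }
  apply NoDup_incl_length.
  - apply NoDup_filter, seq_NoDup.
  - intros i Hi. apply filter_In in Hi. destruct Hi as [_ Hi]. unfold inT in Hi.
    apply existsb_exists in Hi. destruct Hi as [j [Hj Heq]]. apply Nat.eqb_eq in Heq.
    apply in_map_iff. exists j; auto. Qed.

Lemma sumL_nonneg {A} (f : A -> R) l : (forall x, In x l -> 0 <= f x) -> 0 <= sumL f l.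
Proof. induction l; intros H; unfold sumL in *; simpl; [lra|].
  assert (0 <= f a) by (apply H; left; auto).
  assert (0 <= fold_right Rplus 0 (map f l)) by (apply IHl; intros; apply H; right; auto). lra. Qed.

Lemma sumL_ge_term {A} (f : A -> R) l x : In x l -> (forall y, In y l -> 0 <= f y) -> f x <= sumL f l.
Proof. induction l; intros Hx H; [destruct Hx|]. unfold sumL; simpl.
  destruct Hx as [<-|Hx].
  - assert (0 <= sumL f l) by (apply sumL_nonneg; intros; apply H; right; auto). unfold sumL in H0; lra.
  - assert (0 <= f a) by (apply H; left; auto). assert (f x <= sumL f l) by (apply IHl; auto; intros; apply H; right; auto).
    unfold sumL in H1; lra. Qed.

Lemma exp_le_compat x y : x <= y -> exp x <= exp y.
Proof. intros [H|H]; [left; apply exp_increasing; auto| rewrite H; lra]. Qed.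

Lemma indicator_cases (A : Prop) : (A /\ indicator A = 1) \/ (~A /\ indicator A = 0).
Proof. unfold indicator; destruct (excluded_middle_informative A); auto. Qed.

Lemma union_bound n p (E : list bool -> Prop) (Q : nat -> list bool -> Prop) :
  0 <= p <= 1 -> (forall w, In w (assignments n) -> E w -> exists v, (v < n)%nat /\ Q v w) ->
  Pr n p E <= sumL (fun v => Pr n p (Q v)) (seq 0 n).
Proof. intros Hp H. unfold Pr. fold (sumL (fun w => weight p w * indicator (E w)) (assignments n)).
  replace (fun v => fold_right Rplus 0 (map (fun w => weight p w * indicator (Q v w)) (assignments n)))
    with (fun v => sumL (fun w => weight p w * indicator (Q v w)) (assignments n)) by reflexivity.
  rewrite sumL_swap. apply sumL_le. intros w Hw.
  assert (Hnn : forall v, In v (seq 0 n) -> 0 <= weight p w * indicator (Q v w)).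
  { intros v _. apply Rmult_le_pos. apply weight_nonneg; auto. destruct (indicator_cases (Q v w)) as [[_ ->]|[_ ->]]; lra. }
  destruct (indicator_cases (E w)) as [[He ->]|[_ ->]].
  - destruct (H w Hw He) as [v [Hv HQ]].
    eapply Rle_trans; [|apply (sumL_ge_term _ _ v); auto; apply in_seq; lia].
    destruct (indicator_cases (Q v w)) as [[_ ->]|[HH _]]; [lra|tauto].
  - rewrite Rmult_0_r. apply sumL_nonneg; auto. Qed.

Lemma markov n p (X : list bool -> nat) t : 0 <= p <= 1 ->
  Pr n p (fun w => INR (X w) > t) <= sumL (fun w => weight p w * 2 ^ (X w)) (assignments n) / exp (t * ln 2).
Proof. intros Hp. unfold Pr. fold (sumL (fun w => weight p w * indicator (INR (X w) > t)) (assignments n)).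
  unfold Rdiv. rewrite Rmult_comm, <- sumL_scale. apply sumL_le. intros w _.
  assert (H0 := weight_nonneg p w Hp). assert (Hk := exp_pos (t * ln 2)).
  assert (Hl : 0 < ln 2) by (pose proof ln_lt_2; lra).
  assert (Hpw : 2 ^ X w = exp (INR (X w) * ln 2)).
  { rewrite <- Rpower_pow by lra. reflexivity. }
  destruct (indicator_cases (INR (X w) > t)) as [[Ht ->]|[_ ->]].
  - rewrite Hpw. assert (exp (t * ln 2) <= exp (INR (X w) * ln 2)).
    { left. apply exp_increasing. nra. }
    assert (1 <= / exp (t * ln 2) * exp (INR (X w) * ln 2)).
    { apply (Rmult_le_reg_l (exp (t * ln 2))); auto. rewrite <- Rmult_assoc, Rinv_r by lra. lra. }
    nra.
  - rewrite Rmult_0_r. apply Rmult_le_pos; [left; apply Rinv_0_lt_compat; auto|].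
    apply Rmult_le_pos; auto. apply pow_le; lra. Qed.

Lemma expect_bound L M n v p : 0 <= p <= 1 ->
  sumL (fun w => weight p w * 2 ^ (Xc L M n v w)) (assignments n) <= exp (p * INR M).
Proof. intros Hp.
  set (g := fun i b => if andb (inT L M v i) b then 2 else 1).
  assert (E : sumL (fun w => weight p w * 2 ^ (Xc L M n v w)) (assignments n) =
              sumL (fun w => weight p w * pw g w) (assignments n)).
  { apply Rle_antisym; apply sumL_le; intros w Hw; apply assign_len in Hw;
    unfold Xc, is_wp, g; rewrite <- Hw; rewrite (pow_count w (fun i b => andb (inT L M v i) b)); lra. }
  rewrite E, sum_prod.
  eapply Rle_trans.
  - apply (prodI_bound p n g (inT L M v)); [lra|]. intros i. unfold g. simpl.
    destruct (inT L M v i); simpl.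
    + pose proof (exp_ineq1_le p). lra.
    + lra.
  - apply exp_le_compat. apply Rmult_le_compat_l; [lra|]. apply le_INR, size_le.
Qed.

Theorem mainTheorem8 :
  forall (c : R) (k D : nat), 3 / 2 <= c -> (1 <= k)%nat ->
  exists C : R, 0 < C /\
  forall (G : graph) (L : labeling),
    simple_graph G -> max_degree_le G D -> colored_tree_labeling G L ->
    (1 <= gn G)%nat ->
    let n := gn G in
    let p := c * ln (INR n) / Rpower (INR n) (1 / INR k) in
    p <= 1 ->
    Pr n p (fun w => exists S, short_segment G L k S /\ crowded c n w S)
      <= C / INR n.
Proof.
  intros c k D Hc Hk. exists (exp 1). split; [apply exp_pos|].
  intros G L Hs Hd Hct Hn n p Hp1.
  subst n p.
  set (nl := INR (gn G)) in *.
  assert (Hnl : 1 <= nl) by (unfold nl; apply (le_INR 1); auto).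
  set (Lg := ln nl) in *.
  assert (HLg : 0 <= Lg).
  { unfold Lg. destruct Hnl as [h|h]; [left; rewrite <- ln_1; apply ln_increasing; lra| rewrite <- h, ln_1; lra]. }
  set (x := Rpower nl (1 / INR k)) in *.
  assert (Hx : 0 < x) by (unfold x, Rpower; apply exp_pos).
  set (p := c * Lg / x) in *.
  assert (Hp0 : 0 <= p) by (unfold p; apply Rmult_le_pos; [nra| left; apply Rinv_0_lt_compat; auto]).
  assert (Hpx : p * x = c * Lg) by (unfold p; field; lra).
  set (M := Z.to_nat (up (4 * x))).
  destruct (archimed (4 * x)) as [Ha1 Ha2].
  assert (HMe : INR M = IZR (up (4 * x))).
  { unfold M. rewrite INR_IZR_INZ, Z2Nat.id; auto. apply le_IZR. lra. }
  assert (HM1 : 4 * x < INR M) by lra.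
  assert (HM2 : INR M <= 4 * x + 1) by lra.
  set (t := 8 * c * Lg).
  apply Rle_trans with (sumL (fun v => Pr (gn G) p (fun w => INR (Xc L M (gn G) v w) > t)) (seq 0 (gn G))).
  { apply union_bound; [lra|].
    intros w Hw [S [HS Hcr]]. apply assign_len in Hw.
    destruct HS as (Hne & Hnd & (l & Hl1 & Hl2 & Hlv) & Hcons & Hlen).
    destruct S as [|v s]; [congruence|].
    assert (HlenM : (length (v::s) < M)%nat). { apply INR_lt. change (Rpower (INR (gn G)) (1 / INR k)) with x in Hlen. lra. }
    assert (Hch := cons_LC G L k l (v::s) Hlv Hcons).
    assert (Hin : forall y, In y (v::s) -> inT L M v y = true).
    { intros y Hy. destruct (chain_in L s v Hch y Hy) as [j [Hj Hj2]].
      unfold inT. apply existsb_exists. exists j. split; [apply in_seq; lia| apply Nat.eqb_eq; auto]. }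
    assert (Hcnt := count_le L M (gn G) v w (v::s) Hnd Hw Hin).
    unfold crowded in Hcr. fold nl Lg in Hcr.
    assert (Hpos : (0 < length (filter (is_wp w) (v::s)))%nat).
    { destruct (length (filter (is_wp w) (v :: s))) eqn:E; [|lia]. simpl in Hcr. nra. }
    exists v. split.
    - destruct s as [|u s].
      + simpl in Hpos. destruct (is_wp w v) eqn:E; simpl in Hpos; [|lia].
        apply is_wp_lt in E. lia.
      + destruct Hcons as [[_ [Hv _]] _]. auto.
    - apply le_INR in Hcnt. fold t. unfold t. lra. }
  apply Rle_trans with (INR (length (seq 0 (gn G))) * (exp (p * INR M) / exp (t * ln 2))).
  { apply sumL_bound. intros v _. eapply Rle_trans; [apply markov; lra|].
    unfold Rdiv. apply Rmult_le_compat_r; [left; apply Rinv_0_lt_compat, exp_pos|].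
    apply expect_bound; lra. }
  rewrite length_seq. fold nl.
  assert (Hnle : nl = exp Lg) by (unfold Lg; rewrite exp_ln; lra).
  rewrite Hnle. unfold Rdiv.
  rewrite <- !exp_Ropp, <- Rmult_assoc, <- !exp_plus.
  apply exp_le_compat.
  assert (HpM : p * INR M <= 4 * c * Lg + 1).
  { assert (p * INR M <= p * (4 * x + 1)) by (apply Rmult_le_compat_l; lra). nra. }
  pose proof ln2_ge.
  assert (c * ln 2 >= c * (2/3)) by nra.
  unfold t. nra.
Qed.
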